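(* Let $(A,\varphi,\phi_A,[\cdot,\cdot]_A,a_A,K,\langle\cdot,\cdot\rangle)$ be a para-Kähler hom-Lie algebroid with hom-Levi-Civita connection $\nabla$, and identify $A^{-1}$ with $(A^1)^*$ via $\langle\cdot,\cdot\rangle$ (so $\phi_{A^{-1}}$ corresponds to $\phi_{(A^1)^*}:=(\phi_{A^1})^\dagger$). Then: (i) $X\mapsto\nabla_X|_{\Gamma(A^1)}$, $X\in\Gamma(A^1)$, is a representation of the hom-Lie algebroid $A^1$ on $(A^1,\varphi,\phi_{A^1})$ with respect to $\phi_{A^1}$; (ii) $\alpha\mapsto\nabla_\alpha|_{\Gamma((A^1)^* )}$, $\alpha\in\Gamma((A^1)^* )\cong\Gamma(A^{-1})$, is a representation of the hom-Lie algebroid $(A^1)^*\cong A^{-1}$ on $((A^1)^*,\varphi,\phi_{(A^1)^*})$ with respect to $\phi_{(A^1)^*}$.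
   Context: Standing conventions. $M$ is a smooth manifold, $\varphi:M\to M$ a diffeomorphism, $\varphi^*f=f\circ\varphi$. A hom-bundle $(A\to M,\varphi,\phi_A)$ is a vector bundle $A\to M$ together with an invertible $\mathbb R$-linear map $\phi_A:\Gamma(A)\to\Gamma(A)$ with $\phi_A(fX)=\varphi^*(f)\phi_A(X)$. $\varphi^!TM$ is the pullback bundle; its sections are identified with $\mathbb R$-linear maps $D:C^\infty(M)\to C^\infty(M)$ with $D(fg)=D(f)\varphi^*(g)+\varphi^*(f)D(g)$. A hom-Lie algebroid $(A,\varphi,\phi_A,[\cdot,\cdot]_A,a_A)$ consists of a hom-bundle, a skew-symmetric $\mathbb R$-bilinear bracket on $\Gamma(A)$ with $\phi_A[X,Y]_A=[\phi_A X,\phi_A Y]_A$ and $[\phi_A(X),[Y,Z]_A]_A+[\phi_A(Y),[Z,X]_A]_A+[\phi_A(Z),[X,Y]_A]_A=0$, and a bundle map $a_A:A\to\varphi^!TM$ such that $[X,fY]_A=\varphi^*(f)[X,Y]_A+a_A(\phi_A(X))(f)\phi_A(Y)$, $\varphi^*\circ a_A(X)=a_A(\phi_A(X))\circ\varphi^*$, and $a_A([X,Y]_A)\circ\varphi^*=a_A(\phi_AX)\circ a_A(Y)-a_A(\phi_AY)\circ a_A(X)$. For a hom-bundle $(E,\varphi,\phi_E)$, $\phi_E^\dagger$ on $\Gamma(E^* )$ is $\langle\phi_E^\dagger\xi,e\rangle=\varphi^*\langle\xi,\phi_E^{-1}e\rangle$. Pseudo-Riemannian metric: a symmetric nondegenerate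 bilinear form $\langle\cdot,\cdot\rangle$ on $A$ with $\langle\phi_AX,\phi_AY\rangle=\varphi^*\langle X,Y\rangle$. The hom-Levi-Civita connection is the unique $\mathbb R$-bilinear $\nabla:\Gamma(A)\times\Gamma(A)\to\Gamma(A)$ with $\nabla_{fX}Y=\varphi^*(f)\nabla_XY$, $\nabla_X(fY)=\varphi^*(f)\nabla_XY+a_A(\phi_AX)(f)\phi_A(Y)$, $[X,Y]_A=\nabla_XY-\nabla_YX$, and $a_A(\phi_AX)\langle Y,Z\rangle=\langle\nabla_XY,\phi_AZ\rangle+\langle\phi_AY,\nabla_XZ\rangle$. An almost para-complex structure is an invertible map $K:\Gamma(A)\to\Gamma(A)$ with $(\phi_A\circ K)^2=\mathrm{Id}$, $\phi_A\circ K=K\circ\phi_A$, and such that $A^1=\ker(\phi_A\circ K-\mathrm{Id})$ and $A^{-1}=\ker(\phi_A\circ K+\mathrm{Id})$ have the same rank. $(K,\langle\cdot,\cdot\rangle)$ is almost para-Hermitian if $\langle(\phi_A\circ K)X,(\phi_A\circ K)Y\rangle=-\langle X,Y\rangle$. A para-Kähler hom-Lie algebroid is an almost para-Hermitian hom-Lie algebroid with $\nabla_X\phi_A(KY)=\phi_A(K(\nabla_XY))$ for all $X,Y$. In this situation $A^1$ and $A^{-1}$ are $\phi_A$-invariant, closed under $[\cdot,\cdot]_A$ and $\nabla$, and are hom-Lie algebroids with the restricted structures; $A^{-1}\to(A^1)^*$, $\bar X\mapsto\langle\bar X,\cdot\rangle|_{A^1}$ is an isomorphism. Representation: given a hom-Lie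 algebroid $B$, a hom-bundle $(E,\varphi,\phi_E)$ and invertible $\mu:\Gamma(E)\to\Gamma(E)$ with $\mu(fe)=\varphi^*(f)\mu(e)$, a representation of $B$ on $E$ w.r.t. $\mu$ is an assignment $X\mapsto\rho(X)$ of $\mathbb R$-linear maps $\Gamma(E)\to\Gamma(E)$, with $\rho(fX)=\varphi^*(f)\rho(X)$, such that $\rho(X)(fe)=\varphi^*(f)\rho(X)e+a_B(\phi_B(X))(f)\mu(e)$, $\rho(\phi_B(X))\circ\mu=\mu\circ\rho(X)$, and $\rho([X,Y]_B)\circ\mu=\rho(\phi_B(X))\circ\rho(Y)-\rho(\phi_B(Y))\circ\rho(X)$. *)

(* Defs.v *)
(* Algebraic (sections-level) model of hom-Lie algebroids:
   - k        : the scalar field (plays the role of R, the real numbers);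
   - R        : a commutative k-algebra (plays the role of C^oo(M));
   - V        : an R-module (plays the role of Gamma(A));
   - phiS     : R -> R  (plays the role of the pullback phi^* by the diffeo phi);
   - sections of phi^! TM are phi-derivations R -> R;
   - the anchor is a : V -> (R -> R). *)
From HB Require Import structures.
From mathcomp Require Import all_boot all_order all_algebra.
Set Implicit Arguments. Unset Strict Implicit. Unset Printing Implicit Defensive.
Import GRing.Theory Num.Theory.
Local Open Scope ring_scope.

(* k-linearity ("R-linear" in the paper, R = real numbers) of a map on sections *)
Definition klinear (k : numFieldType) (R : comAlgType k) (V : lmodType R)
  (F : V -> V) : Prop :=
  (forall x y : V, F (x + y) = F x + F y) /\
  (forall (c : k) (x : V), F ((c%:A : R) *: x) = (c%:A : R) *: F x).

(* phi^* : C^oo(M) -> C^oo(M), pullback by a diffeomorphism: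
   an invertible k-algebra endomorphism *)
Definition is_pullback (k : numFieldType) (R : comAlgType k) (phiS : R -> R) : Prop :=
  (((forall f g : R, phiS (f + g) = phiS f + phiS g)) /\
     ((forall f g : R, phiS (f * g) = phiS f * phiS g)) /\
     (phiS 1 = 1) /\
     ((forall (c : k) (f : R), phiS (c *: f) = c *: phiS f)) /\
     (bijective phiS)).

Definition is_phi_derivation (k : numFieldType) (R : comAlgType k)
  (phiS : R -> R) (D : R -> R) : Prop :=
  (((forall f g : R, D (f + g) = D f + D g)) /\
     ((forall (c : k) (f : R), D (c *: f) = c *: D f)) /\
     ((forall f g : R, D (f * g) = D f * phiS g + phiS f * D g))).

Definition is_hom_bundle (k : numFieldType) (R : comAlgType k) (V : lmodType R)
  (phiS : R -> R) (phiA : V -> V) : Prop :=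
  ((bijective phiA) /\
     (klinear phiA) /\
     ((forall (f : R) (X : V), phiA (f *: X) = phiS f *: phiA X))).

Definition is_hom_Lie_algebroid (k : numFieldType) (R : comAlgType k) (V : lmodType R)
  (phiS : R -> R) (phiA : V -> V) (br : V -> V -> V) (a : V -> R -> R) : Prop :=
  ((is_hom_bundle phiS phiA) /\
     (
      (forall X, klinear (br X)) /\ (forall Y, klinear (fun X => br X Y))) /\
     ((forall X Y, br X Y = - br Y X)) /\
     ((forall X Y, phiA (br X Y) = br (phiA X) (phiA Y))) /\
     (
      (forall X Y Z, br (phiA X) (br Y Z) + br (phiA Y) (br Z X)
                     + br (phiA Z) (br X Y) = 0)) /\
     (
      (((forall X Y f, a (X + Y) f = a X f + a Y f)) /\
     ((forall (g : R) X f, a (g *: X) f = g * a X f)) /\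
     ((forall X, is_phi_derivation phiS (a X))))) /\
     ((forall X (f : R) Y, br X (f *: Y) = phiS f *: br X Y + a (phiA X) f *: phiA Y)) /\
     ((forall X f, phiS (a X f) = a (phiA X) (phiS f))) /\
     ((forall X Y f, a (br X Y) (phiS f) = a (phiA X) (a Y f) - a (phiA Y) (a X f)))).

Definition is_pseudo_metric (k : numFieldType) (R : comAlgType k) (V : lmodType R)
  (phiS : R -> R) (phiA : V -> V) (g : V -> V -> R) : Prop :=
  (((forall X Y Z, g (X + Y) Z = g X Z + g Y Z)) /\
     ((forall (f : R) X Y, g (f *: X) Y = f * g X Y)) /\
     ((forall X Y, g X Y = g Y X)) /\
     ((forall X, (forall Y, g X Y = 0) -> X = 0)) /\
     ((forall l : V -> R, (forall Y Z, l (Y + Z) = l Y + l Z) ->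
          (forall (f : R) Y, l (f *: Y) = f * l Y) ->
          exists X, forall Y, g X Y = l Y)) /\
     ((forall X Y, g (phiA X) (phiA Y) = phiS (g X Y)))).

Definition is_hom_Levi_Civita (k : numFieldType) (R : comAlgType k) (V : lmodType R)
  (phiS : R -> R) (phiA : V -> V) (br : V -> V -> V) (a : V -> R -> R)
  (g : V -> V -> R) (nabla : V -> V -> V) : Prop :=
  (((forall X, klinear (nabla X)) /\ (forall Y, klinear (fun X => nabla X Y))) /\
     ((forall (f : R) X Y, nabla (f *: X) Y = phiS f *: nabla X Y)) /\
     ((forall X (f : R) Y, nabla X (f *: Y) = phiS f *: nabla X Y + a (phiA X) f *: phiA Y)) /\
     ((forall X Y, br X Y = nabla X Y - nabla Y X)) /\
     ((forall X Y Z, a (phiA X) (g Y Z) = g (nabla X Y) (phiA Z) + g (phiA Y) (nabla X Z)))).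

Definition is_almost_para_complex (k : numFieldType) (R : comAlgType k) (V : lmodType R)
  (phiA : V -> V) (K : V -> V) : Prop :=
  ((bijective K) /\
     ((forall X, phiA (K (phiA (K X))) = X)) /\
     ((forall X, phiA (K X) = K (phiA X))) /\
     ((forall X Y, phiA (K (X + Y)) = phiA (K X) + phiA (K Y)) /\
      (forall (f : R) X, phiA (K (f *: X)) = f *: phiA (K X)))).

Definition is_almost_para_Hermitian (k : numFieldType) (R : comAlgType k) (V : lmodType R)
  (phiA : V -> V) (K : V -> V) (g : V -> V -> R) : Prop :=
  is_almost_para_complex phiA K /\
  (forall X Y, g (phiA (K X)) (phiA (K Y)) = - g X Y).

Definition is_para_Kahler (k : numFieldType) (R : comAlgType k) (V : lmodType R)
  (phiS : R -> R) (phiA : V -> V) (br : V -> V -> V) (a : V -> R -> R)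
  (K : V -> V) (g : V -> V -> R) (nabla : V -> V -> V) : Prop :=
  ((is_pullback phiS) /\
     (is_hom_Lie_algebroid phiS phiA br a) /\
     (is_pseudo_metric phiS phiA g) /\
     (is_hom_Levi_Civita phiS phiA br a g nabla) /\
     (is_almost_para_Hermitian phiA K g) /\
     ((forall X Y, nabla X (phiA (K Y)) = phiA (K (nabla X Y))))).

(* Gamma(A^1) and Gamma(A^{-1}) as predicates on Gamma(A) *)
Definition A1 (k : numFieldType) (R : comAlgType k) (V : lmodType R)
  (phiA K : V -> V) (X : V) : Prop := phiA (K X) = X.
Definition Am1 (k : numFieldType) (R : comAlgType k) (V : lmodType R)
  (phiA K : V -> V) (X : V) : Prop := phiA (K X) = - X.

(* Representation of the hom-Lie algebroid B = (P, phiB, brB, aB) (sections of B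
   are the X : V with P X, with the restricted structure) on the hom-bundle E
   (sections e : V with Q e) with respect to mu, given by X |-> rho X. *)
Definition is_representation (k : numFieldType) (R : comAlgType k) (V : lmodType R)
  (phiS : R -> R) (P : V -> Prop) (phiB : V -> V) (brB : V -> V -> V)
  (aB : V -> R -> R) (Q : V -> Prop) (mu : V -> V) (rho : V -> V -> V) : Prop :=
  ((
      (forall X e, P X -> Q e -> Q (rho X e))) /\
     ((forall X e e', P X -> Q e -> Q e' -> rho X (e + e') = rho X e + rho X e')) /\
     ((forall X (c : k) e, P X -> Q e -> rho X ((c%:A : R) *: e) = (c%:A : R) *: rho X e)) /\
     ((forall (f : R) X e, P X -> Q e -> rho (f *: X) e = phiS f *: rho X e)) /\
     ((forall X (f : R) e, P X -> Q e ->
          rho X (f *: e) = phiS f *: rho X e + aB (phiB X) f *: mu e)) /\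
     ((forall X e, P X -> Q e -> rho (phiB X) (mu e) = mu (rho X e))) /\
     ((forall X Y e, P X -> P Y -> Q e ->
          rho (brB X Y) (mu e) = rho (phiB X) (rho Y e) - rho (phiB Y) (rho X e)))).

(* Main.v *)
Require Import Defs.
From HB Require Import structures.
From mathcomp Require Import all_boot all_order all_algebra.
From mathcomp Require Import ring.
Import GRing.Theory Num.Theory.
Local Open Scope ring_scope.

Lemma addF_opp {U W : zmodType} {F : U -> W} :
  (forall x y, F (x + y) = F x + F y) -> forall x, F (- x) = - F x.
Proof.
move=> H x.
have F0 : F 0 = 0.
  have := H 0 0; rewrite addr0 => /(congr1 (fun z => z - F 0)).
  by rewrite subrr addrK.
have := H x (- x); rewrite subrr F0 => /eqP; rewrite eq_sym addrC addr_eq0.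
by move/eqP.
Qed.

Lemma addF_sub {U W : zmodType} {F : U -> W} :
  (forall x y, F (x + y) = F x + F y) -> forall x y, F (x - y) = F x - F y.
Proof. by move=> H x y; rewrite H (addF_opp H). Qed.

Section PK.
Variables (k : numFieldType) (R : comAlgType k) (V : lmodType R)
  (phiS : R -> R) (phiA : V -> V) (br : V -> V -> V) (a : V -> R -> R)
  (K : V -> V) (g : V -> V -> R) (nabla : V -> V -> V).
Hypothesis HK : is_para_Kahler phiS phiA br a K g nabla.

Ltac dK := have := HK; rewrite /is_para_Kahler /is_pullback /is_hom_Lie_algebroid /is_hom_bundle /is_pseudo_metric /is_hom_Levi_Civita /is_almost_para_Hermitian /is_almost_para_complex /klinear /is_phi_derivation; move=> [[phiS_add [phiS_mul [phiS_1 [phiS_sc phiS_bij]]]] [[[phiA_bij [[phiA_add phiA_k] phiA_sc]] [[br_kl1 br_kl2] [br_skew [phiA_br [br_jac [[a_add [a_sc a_der]] [br_leib [a_phi a_br]]]]]]]] [[gD1 [gZ1 [g_sym [g_nd [g_rep g_phi]]]]] [[[n_kl1 n_kl2] [n_sc1 [n_leib [n_tor n_met]]]] [[[K_bij [J_inv [phiK [J_add J_sc]]]] g_J] n_par]]]]].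

Lemma half (x : R) : x + x = 0 -> x = 0.
Proof.
move=> Hx.
have h2 : (2%:R : k) != 0 by rewrite pnatr_eq0.
have -> : x = (2%:R : k)^-1 *: (x + x).
  by rewrite -mulr2n -scaler_nat scalerA mulVf // scale1r.
by rewrite Hx scaler0.
Qed.

Lemma half2 (x y : R) : x + x = y + y -> x = y.
Proof.
move=> H; apply/eqP; rewrite -subr_eq0; apply/eqP/half.
by rewrite addrACA H addrACA subrr addr0.
Qed.

Lemma gN1 X Y : g (- X) Y = - g X Y.
Proof. dK. by apply: (addF_opp (F := fun X => g X Y)) => x z; apply: gD1. Qed.

Lemma gB1 X Y Z : g (X - Y) Z = g X Z - g Y Z.
Proof. dK. by rewrite gD1 gN1. Qed.

Lemma gsym X Y : g X Y = g Y X.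
Proof. by dK. Qed.

Lemma phiS_sub x y : phiS (x - y) = phiS x - phiS y.
Proof. dK. exact: addF_sub. Qed.

Lemma phiS_opp x : phiS (- x) = - phiS x.
Proof. dK. exact: addF_opp. Qed.

Lemma phiS_addE x y : phiS (x + y) = phiS x + phiS y.
Proof. by dK. Qed.

Lemma nD2 U X Y : nabla U (X + Y) = nabla U X + nabla U Y.
Proof. dK. by case: (n_kl1 U). Qed.

Lemma nB2 U X Y : nabla U (X - Y) = nabla U X - nabla U Y.
Proof. apply: addF_sub => *; exact: nD2. Qed.

Lemma nN2 U X : nabla U (- X) = - nabla U X.
Proof. apply: addF_opp => *; exact: nD2. Qed.

Lemma phiA_surj Z : exists W, Z = phiA (phiA W).
Proof.
dK. case: phiA_bij => h _ hK. exists (h (h Z)). by rewrite !hK.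
Qed.

Lemma nondeg X Y : (forall W, g X (phiA (phiA W)) = g Y (phiA (phiA W))) -> X = Y.
Proof.
move=> H. apply/eqP; rewrite -subr_eq0; apply/eqP.
dK. apply: g_nd => Z. have [W ->] := phiA_surj Z.
by rewrite gB1 H subrr.
Qed.

Definition Cc X Y Z := g (nabla X Y) (phiA Z).
Definition Kz X Y Z :=
  a (phiA X) (g Y Z) + a (phiA Y) (g X Z) - a (phiA Z) (g X Y)
  + g (br X Y) (phiA Z) - g (br X Z) (phiA Y) - g (br Y Z) (phiA X).

Lemma koszul X Y Z : Cc X Y Z + Cc X Y Z = Kz X Y Z.
Proof.
have Hm : forall X Y Z, a (phiA X) (g Y Z) = Cc X Y Z + Cc X Z Y.
  by move=> X' Y' Z'; dK; rewrite n_met /Cc (gsym (phiA Y')).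
have Hb : forall X Y Z, g (br X Y) (phiA Z) = Cc X Y Z - Cc Y X Z.
  by move=> X' Y' Z'; dK; rewrite n_tor gB1.
rewrite /Kz !Hm !Hb; ring.
Qed.


Lemma aD X f h : a X (f + h) = a X f + a X h.
Proof. dK. by case: (a_der X). Qed.

Lemma g0 T : g 0 T = 0.
Proof. by rewrite -[X in g X](subrr (0:V)) gB1 subrr. Qed.

Lemma Kz_phi X Y Z : phiS (Kz X Y Z) = Kz (phiA X) (phiA Y) (phiA Z).
Proof.
dK. by rewrite /Kz !(phiS_addE, phiS_opp) !a_phi -!g_phi !phiA_br.
Qed.

Lemma n_phi X Y : nabla (phiA X) (phiA Y) = phiA (nabla X Y).
Proof.
apply: nondeg => W. apply: half2.
have := koszul (phiA X) (phiA Y) (phiA W); rewrite /Cc => ->.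
dK. rewrite g_phi -phiS_addE.
have := koszul X Y W; rewrite /Cc => ->.
by rewrite Kz_phi.
Qed.

Definition Rc X Y Z := nabla (phiA X) (nabla Y Z) - nabla (phiA Y) (nabla X Z)
  - nabla (br X Y) (phiA Z).

Lemma metric_R X Y Z W :
  g (Rc X Y Z) (phiA (phiA W)) + g (Rc X Y W) (phiA (phiA Z)) = 0.
Proof.
have E1 : a (phiA (phiA X)) (a (phiA Y) (g Z W)) =
  g (nabla (phiA X) (nabla Y Z)) (phiA (phiA W)) + g (phiA (nabla Y Z)) (phiA (nabla X W))
  + (g (phiA (nabla X Z)) (phiA (nabla Y W)) + g (nabla (phiA X) (nabla Y W)) (phiA (phiA Z))).
  dK. by rewrite n_met aD !n_met !n_phi (gsym (phiA (phiA Z))).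
have E2 : a (phiA (phiA Y)) (a (phiA X) (g Z W)) =
  g (nabla (phiA Y) (nabla X Z)) (phiA (phiA W)) + g (phiA (nabla X Z)) (phiA (nabla Y W))
  + (g (phiA (nabla Y Z)) (phiA (nabla X W)) + g (nabla (phiA Y) (nabla X W)) (phiA (phiA Z))).
  dK. by rewrite n_met aD !n_met !n_phi (gsym (phiA (phiA Z))).
have E3 : a (br (phiA X) (phiA Y)) (phiS (g Z W)) =
  g (nabla (br X Y) (phiA Z)) (phiA (phiA W)) + g (nabla (br X Y) (phiA W)) (phiA (phiA Z)).
  dK. by rewrite -phiA_br -g_phi n_met (gsym (phiA (phiA Z))).
have E4 : a (br (phiA X) (phiA Y)) (phiS (g Z W)) =
  a (phiA (phiA X)) (a (phiA Y) (g Z W)) - a (phiA (phiA Y)) (a (phiA X) (g Z W)).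
  by dK.
move: E4; rewrite E1 E2 E3 /Rc !gB1 => E4.
move/eqP: E4; rewrite -subr_eq0 => /eqP E4.
rewrite -[RHS]oppr0 -E4; ring.
Qed.


Lemma bianchi X Y Z T :
  g (Rc X Y Z) T + g (Rc Y Z X) T + g (Rc Z X Y) T = 0.
Proof.
have H : g (br (phiA X) (br Y Z) + br (phiA Y) (br Z X) + br (phiA Z) (br X Y)) T = 0.
  by dK; rewrite br_jac g0.
rewrite -[RHS]H /Rc.
dK. rewrite !n_tor !nB2 !gD1 ?gN1; ring.
Qed.

Lemma isoP_flat (P : V -> Prop) :
  (forall U S, P S -> P (nabla U S)) -> (forall S, P S -> P (phiA S)) ->
  (forall x y, P x -> P y -> P (x - y)) ->
  (forall x y, P x -> P y -> g x y = 0) ->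
  forall X Y Z, P X -> P Y -> P Z -> Rc X Y Z = 0.
Proof.
move=> Pn Pphi Psub Piso.
have PR : forall U W T, P T -> P (Rc U W T).
  by move=> U W T PT; rewrite /Rc; apply: (Psub); [apply: (Psub)|]; apply: (Pn); auto.
move=> X Y Z PX PY PZ.
apply: nondeg => W; rewrite g0.
have PT : P (phiA (phiA Z)) by auto.
have B := bianchi X Y W (phiA (phiA Z)).
rewrite (Piso _ _ (PR _ _ _ PX) PT) (Piso _ _ (PR _ _ _ PY) PT) !addr0 in B.
have M := metric_R X Y Z W.
by rewrite B addr0 in M.
Qed.

Lemma rep_P (P : V -> Prop) :
  (forall U S, P S -> P (nabla U S)) -> (forall S, P S -> P (phiA S)) ->
  (forall x y, P x -> P y -> P (x - y)) ->
  (forall x y, P x -> P y -> g x y = 0) ->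
  is_representation phiS P phiA br a P phiA nabla.
Proof.
move=> Pn Pphi Psub Piso.
have Fl := @isoP_flat P Pn Pphi Psub Piso.
split; first by move=> *; apply: Pn.
split; first by move=> *; apply: nD2.
split; first by dK; move=> X c e _ _; case: (n_kl1 X).
split; first by dK; move=> *; apply: n_sc1.
split; first by dK; move=> *; apply: n_leib.
split; first by move=> *; apply: n_phi.
move=> X Y e PX PY Pe.
have := Fl _ _ _ PX PY Pe; rewrite /Rc => /eqP; rewrite subr_eq0 => /eqP.
by move=> <-.
Qed.

Lemma Jsub x y : phiA (K (x - y)) = phiA (K x) - phiA (K y).
Proof. dK. exact: (addF_sub (F := fun X => phiA (K X))). Qed.

Lemma phiA_opp x : phiA (- x) = - phiA x.
Proof. dK. exact: addF_opp. Qed.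

Lemma rep_A1 : is_representation phiS (A1 phiA K) phiA br a (A1 phiA K) phiA nabla.
Proof.
apply: rep_P; rewrite /A1.
- by dK; move=> U S HS; rewrite -n_par HS.
- by dK; move=> S HS; rewrite -(phiK S) HS.
- by move=> x y Hx Hy; rewrite Jsub Hx Hy.
- move=> x y Hx Hy; apply: half.
  dK. by rewrite -{1}Hx -{1}Hy g_J addNr.
Qed.

Lemma rep_Am1 : is_representation phiS (Am1 phiA K) phiA br a (Am1 phiA K) phiA nabla.
Proof.
apply: rep_P; rewrite /Am1.
- by dK; move=> U S HS; rewrite -n_par HS nN2.
- by dK; move=> S HS; rewrite -(phiK S) HS phiA_opp.
- by move=> x y Hx Hy; rewrite Jsub Hx Hy opprB opprK addrC.
- move=> x y Hx Hy; apply: half.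
  have E : g (phiA (K x)) (phiA (K y)) = g x y by rewrite Hx Hy gN1 gsym gN1 opprK gsym.
  by dK; rewrite -{1}E g_J addNr.
Qed.

End PK.

Theorem mainTheorem8 (k : numFieldType) (R : comAlgType k) (V : lmodType R)
  (phiS : R -> R) (phiA : V -> V) (br : V -> V -> V) (a : V -> R -> R)
  (K : V -> V) (g : V -> V -> R) (nabla : V -> V -> V) :
  is_para_Kahler phiS phiA br a K g nabla ->
  is_representation phiS (A1 phiA K) phiA br a (A1 phiA K) phiA nabla /\
  is_representation phiS (Am1 phiA K) phiA br a (Am1 phiA K) phiA nabla.
Proof. by move=> H; split; [exact: (@rep_A1 _ _ _ _ _ _ _ _ _ _ H) | exact: (@rep_Am1 _ _ _ _ _ _ _ _ _ _ H)]. Qed.
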